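(* For any matrix $Z=(Z_{ij})_{1\leq i,j\leq 3}$ of formal variables $Z_{ij}$, we have $$ \left(A|_{v = -p} \right)Z \left(\frac{\det(A)}{P(v)} A^{-1} \Big|_{v = -p}\right)=(U_{ij}X_j)_{1\leq i,j\leq 3} $$ with $pX_j\in R^{\mathrm{aux}}[Z_{ij},\, 1\leq i,j\leq 3]$, where $U=A|_{v=-p}$.
   Context: $p>3$ is prime, $\mathcal{O}$ is the ring of integers of a finite extension of $\mathbb{Q}_p$, and $P(v)=v+p$. Let $$ A = \begin{pmatrix} c_{11}+c_{11}^*(v+p)&c_{12}&c_{13}\\ vc_{21}&c_{22}+ c_{22}^*(v+p) &c_{23}\\ vc_{31}&vc_{32}&c_{33}+c_{33}^*(v+p) \end{pmatrix}. $$ $R^{\mathrm{aux}}$ is the $p$-saturation of the quotient of $\mathcal{O}[c_{ij},(c^{*}_{ii})^{\pm 1},\,1\leq i,j\leq 3]$ by the relations: all $2\times 2$ minors of $U=A|_{v=-p}=\begin{pmatrix}c_{11}&c_{12}&c_{13}\\-pc_{21}&c_{22}&c_{23}\\-pc_{31}&-pc_{32}&c_{33}\end{pmatrix}$ vanish, and $c_{11}c^*_{22}c^*_{33}+c_{22}c^*_{33}c^*_{11}+c_{33}c^*_{11}c^*_{22}-c_{11}^*c_{23}c_{32}-c_{22}^*c_{13}c_{31}-c_{33}^*c_{12}c_{21}+c_{21}c_{13}c_{32}=0$. Then $\frac{\det(A)}{P(v)}A^{-1}|_{v=-p}$ is the matrix $$\begin{pmatrix} c_{22}^* c_{33} + c_{33}^*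 c_{22} - c_{23} c_{32} & c_{13} c_{32} - c^*_{33} c_{12} & -c_{22}^* c_{13}\\ p c_{33}^* c_{21} & c_{11}^* c_{33} + c_{33}^* c_{11} - c_{13} c_{31}&c_{13} c_{21} - c_{11}^*c_{23}\\ -p c_{21} c_{32} + p c^*_{22} c_{31} & pc_{11}^* c_{32} & c_{11}^* c_{22} + c_{22}^* c_{11} - c_{12} c_{21} \end{pmatrix}.$$ It is known that $R^{\mathrm{aux}}$ is a domain in which every $c_{ij}$ is nonzero. *)

(* Defs.v *)
From mathcomp Require Import all_boot all_algebra.
From mathcomp Require Import fraction.
From mathcomp.multinomials Require Import mpoly.
Set Implicit Arguments. Unset Strict Implicit. Unset Printing Implicit Defensive.
Import GRing.Theory.
Local Open Scope ring_scope.

(* Entry c_{ij} with 1-based indices i j in {1,2,3}. *)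
Definition ent {T : Type} (c : 'M[T]_3) (i j : nat) : T :=
  c (@inord 2 i.-1) (@inord 2 j.-1).
Definition ents {T : Type} (cs : 'I_3 -> T) (i : nat) : T := cs (@inord 2 i.-1).

Section Aux.
Variable R : idomainType.
Variables (p : nat) (c : 'M[R]_3) (cs : 'I_3 -> R).

Definition Ppoly : {poly R} := 'X + (p%:R)%:P.

Definition Amat : 'M[{poly R}]_3 :=
  \matrix_(i, j)
    if i == j then (c i i)%:P + (cs i)%:P * Ppoly
    else if (i < j)%N then (c i j)%:P else 'X * (c i j)%:P.

Definition Umat : 'M[R]_3 := \matrix_(i, j) (Amat i j).[- p%:R].

(* det(A)/P(v) * A^{-1} = adj(A)/P(v), evaluated at v = -p *)
Definition Bmat : 'M[R]_3 := \matrix_(i, j) ((\adj Amat i j) %/ Ppoly).[- p%:R].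

Definition minors2_vanish (M : 'M[R]_3) : Prop :=
  forall i1 i2 j1 j2 : 'I_3, M i1 j1 * M i2 j2 - M i1 j2 * M i2 j1 = 0.

(* the cubic relation defining R^aux *)
Definition cubic_rel : R :=
  ent c 1 1 * ents cs 2 * ents cs 3 + ent c 2 2 * ents cs 3 * ents cs 1
  + ent c 3 3 * ents cs 1 * ents cs 2
  - ents cs 1 * ent c 2 3 * ent c 3 2 - ents cs 2 * ent c 1 3 * ent c 3 1
  - ents cs 3 * ent c 1 2 * ent c 2 1 + ent c 2 1 * ent c 1 3 * ent c 3 2.
End Aux.

Definition Zmx (K : nzRingType) : 'M[{mpoly K[3 * 3]}]_3 :=
  \matrix_(i, j) 'X_(mxvec_index i j).

(* Main.v *)
Require Import Defs.
From mathcomp Require Import all_boot all_algebra.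
From mathcomp Require Import fraction.
From mathcomp.multinomials Require Import mpoly.
From mathcomp Require Import ring.
Import GRing.Theory.
Local Open Scope ring_scope.
Set Implicit Arguments. Unset Strict Implicit.

Lemma det2 (T : comNzRingType) (N : 'M[T]_2) : \det N = N 0 0 * N 1 1 - N 0 1 * N 1 0.
Proof.
pose e i j := N (inord i) (inord j).
have E : forall a b : 'I_2, N a b = e a b by move=> a b; rewrite /e !inord_val.
rewrite (expand_det_row _ 0) !big_ord_recl big_ord0 /cofactor !det_mx11 !mxE /=.
rewrite !E /=. rewrite /bump /=. ring.
Qed.

Definition e3 (T : Type) (M : 'M[T]_3) (i j : nat) := M (inord i) (inord j).

Definition adj3f (T : comNzRingType) (M : 'M[T]_3) : 'M[T]_3 :=
  \matrix_(i, j)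
   match nat_of_ord i, nat_of_ord j with
   | 0, 0 => e3 M 1 1 * e3 M 2 2 - e3 M 1 2 * e3 M 2 1
   | 0, 1 => e3 M 0 2 * e3 M 2 1 - e3 M 0 1 * e3 M 2 2
   | 0, _ => e3 M 0 1 * e3 M 1 2 - e3 M 0 2 * e3 M 1 1
   | 1, 0 => e3 M 1 2 * e3 M 2 0 - e3 M 1 0 * e3 M 2 2
   | 1, 1 => e3 M 0 0 * e3 M 2 2 - e3 M 0 2 * e3 M 2 0
   | 1, _ => e3 M 0 2 * e3 M 1 0 - e3 M 0 0 * e3 M 1 2
   | _, 0 => e3 M 1 0 * e3 M 2 1 - e3 M 1 1 * e3 M 2 0
   | _, 1 => e3 M 0 1 * e3 M 2 0 - e3 M 0 0 * e3 M 2 1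
   | _, _ => e3 M 0 0 * e3 M 1 1 - e3 M 0 1 * e3 M 1 0
   end.

Lemma adj3 (T : comNzRingType) (M : 'M[T]_3) : \adj M = adj3f M.
Proof.
have E : forall a b : 'I_3, M a b = e3 M a b by move=> a b; rewrite /e3 !inord_val.
apply/matrixP => i j; rewrite !mxE /cofactor det2 !mxE !E.
case: i => [[|[|[|i]]] Hi] //; case: j => [[|[|[|j]]] Hj] //=;
 rewrite /bump /= ?add0n ?addn0 ?(modn_small (isT : (1 < 2)%N)) ?(modn_small (isT : (0<2)%N)) ?add1n /=.
all: ring.
Qed.

Lemma Amat_inord (R : idomainType) (p : nat) (c : 'M[R]_3) (cs : 'I_3 -> R) (a b : nat) :
  (a < 3)%N -> (b < 3)%N ->
  Amat p c cs (inord a) (inord b) =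
  if a == b then (c (inord a) (inord a))%:P + (cs (inord a))%:P * Ppoly R p
  else if (a < b)%N then (c (inord a) (inord b))%:P else 'X * (c (inord a) (inord b))%:P.
Proof.
move=> ha hb; rewrite mxE -(inj_eq val_inj) /= !inordK //.
Qed.

Lemma div_eval (R : idomainType) (p : nat) (q : {poly R}) :
  q.[- p%:R] = 0 -> (q %/ Ppoly R p).[- p%:R] = q^`().[- p%:R].
Proof.
move=> hq; have /factor_theorem [r ->] : root q (- p%:R) by apply/rootP.
have eP : 'X - (- p%:R)%:P = Ppoly R p by rewrite /Ppoly polyCN opprK.
have mP : Ppoly R p \is monic by rewrite /Ppoly monicXaddC.
rewrite eP (Pdiv.IdomainMonic.mulpK mP).
by rewrite derivM /Ppoly !derivE !hornerE addNr mulr0 add0r.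
Qed.


Lemma comb1 (R : comNzRingType) (x y k m : R) : m = 0 -> x - y = k * m -> x = y.
Proof. by move=> -> ; rewrite mulr0 => /eqP; rewrite subr_eq0 => /eqP. Qed.

Lemma comb4 (R : comNzRingType) (x k1 k2 k3 k4 m1 m2 m3 m4 : R) :
  m1 = 0 -> m2 = 0 -> m3 = 0 -> m4 = 0 -> x = k1 * m1 + k2 * m2 + k3 * m3 + k4 * m4 -> x = 0.
Proof. by move=> -> -> -> -> ->; rewrite !mulr0 !addr0. Qed.

Lemma diag_lem (R : idomainType) (q B u Y s w : R) :
  s \is a GRing.unit -> w != 0 -> w * (q * B * s + u * Y) = 0 -> q * B = - (u * Y / s).
Proof.
move=> hs hw /eqP; rewrite mulf_eq0 (negPf hw) /= addr_eq0 => /eqP h.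
apply: (mulIr hs); rewrite h mulNr divrK //.
Qed.

Theorem lemma8p2 (p : nat) (R : idomainType) (c : 'M[R]_3) (cs : 'I_3 -> R) :
  prime p -> (3 < p)%N -> (p%:R : R) != 0 ->
  (forall i, cs i \is a GRing.unit) ->
  (forall i j, c i j != 0) ->
  minors2_vanish (Umat p c cs) ->
  cubic_rel c cs = 0 ->
  exists X : 'I_3 -> {mpoly {fraction R}[3 * 3]},
    map_mx (fun r : R => (@tofrac R r)%:MP) (Umat p c cs) *m Zmx {fraction R}
      *m map_mx (fun r : R => (@tofrac R r)%:MP) (Bmat p c cs)
    = \matrix_(i, j) ((@tofrac R (Umat p c cs i j))%:MP * X j)
    /\ forall j, exists Y : {mpoly R[3 * 3]},
         map_mpoly (@tofrac R) Y = (p%:R : {fraction R}) *: X j.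
Proof.
move=> _ _ pn0 hs hc hmin hcub.
have Uent : forall a b, (a < 3)%N -> (b < 3)%N -> Umat p c cs (inord a) (inord b) =
   if a == b then c (inord a) (inord a) else if (a < b)%N then c (inord a) (inord b)
   else - p%:R * c (inord a) (inord b).
  move=> a b ha hb; rewrite /Umat mxE Amat_inord //.
  case: eqP => [->|_]; last case: ifP => _; rewrite !hornerE /Ppoly ?hornerE.
  1-3: try (by rewrite addNr mulr0 addr0).
  1,2: reflexivity.
have Bent : forall a b, (a < 3)%N -> (b < 3)%N -> Bmat p c cs (inord a) (inord b) =
   ((adj3f (Amat p c cs)) (inord a) (inord b) %/ Ppoly R p).[- p%:R].
  by move=> a b ha hb; rewrite /Bmat mxE adj3.
have m0101 := hmin (inord 0) (inord 1) (inord 0) (inord 1).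
have m0102 := hmin (inord 0) (inord 1) (inord 0) (inord 2).
have m0112 := hmin (inord 0) (inord 1) (inord 1) (inord 2).
have m0201 := hmin (inord 0) (inord 2) (inord 0) (inord 1).
have m0202 := hmin (inord 0) (inord 2) (inord 0) (inord 2).
have m0212 := hmin (inord 0) (inord 2) (inord 1) (inord 2).
have m1201 := hmin (inord 1) (inord 2) (inord 0) (inord 1).
have m1202 := hmin (inord 1) (inord 2) (inord 0) (inord 2).
have m1212 := hmin (inord 1) (inord 2) (inord 1) (inord 2).
rewrite !Uent //= in m0101 m0102 m0112 m0201 m0202 m0212 m1201 m1202 m1212.
rewrite /cubic_rel /ent /ents /= in hcub.
pose G : 'M[R]_3 := \matrix_(i, j)
   match nat_of_ord i, nat_of_ord j with
   | 0, 0 => (c (inord 1) (inord 1) * cs (inord 2) + c (inord 2) (inord 2) * cs (inord 1)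
              - c (inord 1) (inord 2) * c (inord 2) (inord 1) + p%:R * cs (inord 1) * cs (inord 2)) / cs (inord 0)
   | 0, 1 => p%:R * cs (inord 2) + c (inord 2) (inord 2)
   | 0, _ => p%:R * cs (inord 1)
   | 1, 0 => p%:R * cs (inord 2)
   | 1, 1 => (c (inord 0) (inord 0) * cs (inord 2) + c (inord 2) (inord 2) * cs (inord 0)
              - c (inord 0) (inord 2) * c (inord 2) (inord 0) + p%:R * cs (inord 0) * cs (inord 2)) / cs (inord 1)
   | 1, _ => p%:R * cs (inord 0) + c (inord 0) (inord 0)
   | _, 0 => p%:R * cs (inord 1) + c (inord 1) (inord 1)
   | _, 1 => p%:R * cs (inord 0)
   | _, _ => (c (inord 0) (inord 0) * cs (inord 1) + c (inord 1) (inord 1) * cs (inord 0)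
              - c (inord 0) (inord 1) * c (inord 1) (inord 0) + p%:R * cs (inord 0) * cs (inord 1)) / cs (inord 2)
   end.
have key : forall l j : 'I_3, p%:R * Bmat p c cs l j = - (Umat p c cs l j * G l j).
  move=> l j.
  case: l => [[|[|[|l]]] Hl]; last by []; case: j => [[|[|[|j]]] Hj]; last 1 [by []];
   rewrite -[Ordinal Hl]inord_val -[Ordinal Hj]inord_val /= Bent // Uent // /adj3f
     [X in (X %/ _)]mxE [G _ _]mxE !inordK //= /e3 !Amat_inord //= div_eval.
  all: rewrite ?hornerE ?derivE ?hornerE /Ppoly ?hornerE /=.
  Show.   apply: (diag_lem (w := 1) (hs _)); first exact: oner_neq0.
  apply: (comb4 (k1 := p%:R) (k2 := cs (inord 1)) (k3 := cs (inord 2)) (k4 := - c (inord 2) (inord 1)) hcub m0202 m0101 m0102); ring.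
  apply: (comb1 (k := 1) m1212); ring.
  apply: (comb1 (k := 1) m0212); ring.
  apply: (comb1 (k := -1) m0212); ring.
  apply: (comb1 (k := 0) m0101); ring.
  apply: (comb1 (k := 1) m0112); ring.
  apply: (comb1 (k := 1) m1202); ring.
  apply: (comb1 (k := -1) m1202); ring.
  apply: (diag_lem (w := p%:R) (hs _)); first exact: pn0.
  apply: (comb4 (k1 := p%:R * p%:R) (k2 := p%:R * cs (inord 2)) (k3 := p%:R * cs (inord 0)) (k4 := - c (inord 0) (inord 2)) hcub m0101 m1212 m1201); ring.
  apply: (comb1 (k := 1) m0202); ring.
  apply: (comb1 (k := 1) m0102); ring.
  apply: (comb1 (k := -1) m0102); ring.
  apply: (comb1 (k := -2) m1201); ring.
  apply: (comb1 (k := 1) m1201); ring.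
  apply: (comb1 (k := 1) m0201); ring.
  apply: (comb1 (k := -1) m0201); ring.
  apply: (diag_lem (w := 1) (hs _)); first exact: oner_neq0.
  apply: (comb4 (k1 := p%:R) (k2 := cs (inord 1)) (k3 := cs (inord 0)) (k4 := - c (inord 1) (inord 0)) hcub m0202 m1212 m0212); ring.
  apply: (comb1 (k := 1) m0101); ring.
have scal : forall i j k l, p%:R * (Umat p c cs i k * Bmat p c cs l j)
    = Umat p c cs i j * (- (Umat p c cs l k * G l j)).
  move=> i j k l; rewrite mulrCA key.
  apply: (comb1 (k := - G l j) (hmin i l k j)); ring.
move: scal; set U := Umat p c cs; set B := Bmat p c cs => scal.
clearbody U B G.
have pF : (p%:R : {fraction R}) != 0.
  by rewrite -(rmorph_nat (@tofrac R)) tofrac_eq0.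
pose Y (j : 'I_3) : {mpoly R[3 * 3]} :=
  \sum_(k < 3) \sum_(l < 3) (- (U l k * G l j)) *: 'X_(mxvec_index k l).
exists (fun j => (p%:R : {fraction R})^-1 *: map_mpoly (@tofrac R) (Y j)).
split; last first.
  by move=> j; exists (Y j); rewrite scalerA mulfV // scale1r.
apply/matrixP => i j; rewrite !mxE.
under eq_bigr do rewrite !mxE big_distrl /=.
rewrite exchange_big /= /Y (raddf_sum (map_mpoly (tofrac (R:=R)))) scaler_sumr mulr_sumr.
apply: eq_bigr => k _.
rewrite (raddf_sum (map_mpoly (tofrac (R:=R)))) scaler_sumr mulr_sumr.
apply: eq_bigr => l _.
rewrite !mxE /= map_mpolyZ map_mpolyX mulrAC -rmorphM mul_mpolyC mul_mpolyC !scalerA.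
congr (_ *: _).
apply: (mulfI pF); rewrite [RHS]mulrA (mulrCA _ _ (_^-1)) mulfV // mulr1.
by rewrite -(rmorph_nat (@tofrac R)) -!rmorphM scal.
Qed.
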